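(* For every integer $n\geq 3$, there exists a set of $n$ points in $\mathbb{R}^{n-2}$ that is in crescent configuration.
   Context: A set of points in $\mathbb{R}^d$ is in general position if no $d+1$ of the points lie on a common (affine) hyperplane of $\mathbb{R}^d$ and no $d+2$ of the points lie on a common hypersphere of $\mathbb{R}^d$. A set of $n$ points in $\mathbb{R}^d$ is in crescent configuration if the points are in general position in $\mathbb{R}^d$, the Euclidean distances between the $\binom{n}{2}$ pairs of distinct points take exactly $n-1$ distinct values, and for every $1\le i\le n-1$ there is one of these distance values that is attained by exactly $i$ pairs of points. *)

(* Defs.v *)
From Stdlib Require Import Reals List Arith.
Import ListNotations.
Open Scope R_scope.

(* A point of R^d is modelled as p : nat -> R, of which only the
   coordinates k < d are meaningful.  A configuration of n points is
   P : nat -> (nat -> R), of which only the points P 0, ..., P (n-1) matter. *)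

Fixpoint sumR (d : nat) (f : nat -> R) : R :=
  match d with
  | O => 0
  | S d' => sumR d' f + f d'
  end.

Definition edist (d : nat) (x y : nat -> R) : R :=
  sqrt (sumR d (fun k => (x k - y k) ^ 2)).

Definition pt_eq (d : nat) (x y : nat -> R) : Prop :=
  forall k, (k < d)%nat -> x k = y k.

Definition distinct_pts (d n : nat) (P : nat -> nat -> R) : Prop :=
  forall i j, (i < n)%nat -> (j < n)%nat -> i <> j -> ~ pt_eq d (P i) (P j).

Definition index_subset (n m : nat) (S : list nat) : Prop :=
  NoDup S /\ length S = m /\ Forall (fun i => (i < n)%nat) S.

Definition on_common_hyperplane (d : nat) (P : nat -> nat -> R) (S : list nat) : Prop :=
  exists (a : nat -> R) (b : R),
    (exists k, (k < d)%nat /\ a k <> 0) /\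
    Forall (fun i => sumR d (fun k => a k * P i k) = b) S.

Definition on_common_hypersphere (d : nat) (P : nat -> nat -> R) (S : list nat) : Prop :=
  exists (c : nat -> R) (r : R),
    0 < r /\ Forall (fun i => edist d (P i) c = r) S.

Definition general_position (d n : nat) (P : nat -> nat -> R) : Prop :=
  distinct_pts d n P /\
  (forall S, index_subset n (d + 1) S -> ~ on_common_hyperplane d P S) /\
  (forall S, index_subset n (d + 2) S -> ~ on_common_hypersphere d P S).

(* all unordered pairs (i,j) with i < j < n *)
Definition pairs (n : nat) : list (nat * nat) :=
  flat_map (fun i => map (fun j => (i, j)) (seq (S i) (n - S i))) (seq 0 n).

Definition Reqb (x y : R) : bool := if Req_EM_T x y then true else false.

Definition mult (d n : nat) (P : nat -> nat -> R) (v : R) : nat :=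
  length (filter (fun ij => Reqb (edist d (P (fst ij)) (P (snd ij))) v) (pairs n)).

Definition is_distance (d n : nat) (P : nat -> nat -> R) (v : R) : Prop :=
  exists i j, (i < j)%nat /\ (j < n)%nat /\ edist d (P i) (P j) = v.

Definition crescent (d n : nat) (P : nat -> nat -> R) : Prop :=
  general_position d n P /\
  (exists V : list R, NoDup V /\ length V = (n - 1)%nat /\
      (forall v, In v V <-> is_distance d n P v)) /\
  (forall m, (1 <= m <= n - 1)%nat ->
      exists v, is_distance d n P v /\ mult d n P v = m).

(* Main.v *)
Require Import Defs.
From Stdlib Require Import Reals List Arith Lia Lra Classical.
Import ListNotations.
Open Scope R_scope.

Lemma sumR_S d f : sumR (S d) f = sumR d f + f d.
Proof. reflexivity. Qed.

Lemma sumR_ext d f g : (forall k, (k < d)%nat -> f k = g k) -> sumR d f = sumR d g.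
Proof.
  induction d; intros H; simpl; auto.
  rewrite IHd by (intros; apply H; lia). rewrite H by lia. reflexivity.
Qed.

Lemma sumR_zero d f : (forall k, (k < d)%nat -> f k = 0) -> sumR d f = 0.
Proof.
  induction d; intros H; simpl; [reflexivity|].
  rewrite IHd by (intros; apply H; lia). rewrite H by lia. ring.
Qed.

Lemma sumR_plus d f g : sumR d (fun k => f k + g k) = sumR d f + sumR d g.
Proof. induction d; simpl; [ring| rewrite IHd; ring]. Qed.

Lemma sumR_4 d f g h e : sumR d (fun k => f k - g k + h k + e k)
  = sumR d f - sumR d g + sumR d h + sumR d e.
Proof. induction d; simpl; [ring| rewrite IHd; ring]. Qed.

Lemma sumR_nonneg d f : (forall k, (k < d)%nat -> 0 <= f k) -> 0 <= sumR d f.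
Proof.
  induction d; intros H; simpl; [lra|].
  assert (0 <= f d) by (apply H; lia).
  assert (0 <= sumR d f) by (apply IHd; intros; apply H; lia). lra.
Qed.

Lemma sumR_prefix d i g :
  sumR d (fun k => if (k <? i)%nat then g k else 0) = sumR (Nat.min i d) g.
Proof.
  induction d; simpl.
  - rewrite Nat.min_0_r. reflexivity.
  - rewrite IHd. destruct (Nat.ltb_spec d i).
    + replace (Nat.min i (S d)) with (S d) by lia.
      replace (Nat.min i d) with d by lia. reflexivity.
    + replace (Nat.min i (S d)) with (Nat.min i d) by lia. ring.
Qed.

Lemma sumR_single_in d i h : (1 <= i <= d)%nat ->
  sumR d (fun k => if (S k =? i)%nat then h k else 0) = h (i-1)%nat.
Proof.
  induction d; intros Hi; [lia|]. rewrite sumR_S.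
  destruct (Nat.eqb_spec (S d) i).
  - subst. rewrite sumR_zero. replace (S d - 1)%nat with d by lia. ring.
    intros k Hk. destruct (Nat.eqb_spec (S k) (S d)); [lia|reflexivity].
  - rewrite IHd by lia. ring.
Qed.

Lemma sumR_single_out d i h : (i = 0 \/ d < i)%nat ->
  sumR d (fun k => if (S k =? i)%nat then h k else 0) = 0.
Proof.
  intros Hi; apply sumR_zero; intros k Hk.
  destruct (Nat.eqb_spec (S k) i); [lia|reflexivity].
Qed.

Lemma sumR_tail d i g : (i <= d)%nat -> (forall k, (i <= k < d)%nat -> g k = 0) ->
  sumR d g = sumR i g.
Proof.
  induction d; intros Hi H.
  - replace i with 0%nat by lia. reflexivity.
  - destruct (Nat.eq_dec i (S d)); [subst; reflexivity|].
    rewrite sumR_S, IHd by (try intros; try apply H; lia).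
    rewrite H by lia. ring.
Qed.

Definition tt (k : nat) : R := 2 ^ k.
Definition TT (i : nat) : R := sumR i (fun k => tt k ^ 2).
Definition uu (i : nat) : R := sqrt (TT i).
Definition PP (i k : nat) : R :=
  (if (k <? i)%nat then tt k else 0) + (if (S k =? i)%nat then uu i else 0).

Lemma tt_pos k : 0 < tt k.
Proof. unfold tt. apply pow_lt. lra. Qed.

Lemma TT_S0 k : TT (S k) = TT k + tt k ^ 2.
Proof. reflexivity. Qed.

Lemma tt_sq k : tt k ^ 2 = 3 * TT k + 1.
Proof.
  induction k.
  - unfold tt, TT. simpl. ring.
  - rewrite TT_S0. replace (tt (S k)) with (2 * tt k) by reflexivity.
    replace ((2 * tt k) ^ 2) with (4 * tt k ^ 2) by ring. rewrite IHk. ring.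
Qed.

Lemma TT_S k : TT (S k) = 4 * TT k + 1.
Proof. rewrite TT_S0, tt_sq. ring. Qed.

Lemma TT_0 : TT 0 = 0.
Proof. reflexivity. Qed.

Lemma TT_nonneg k : 0 <= TT k.
Proof. induction k; [rewrite TT_0; lra| rewrite TT_S; lra]. Qed.

Lemma TT_ge1 k : (1 <= k)%nat -> 1 <= TT k.
Proof. intros H. destruct k; [lia|]. rewrite TT_S. pose proof (TT_nonneg k). lra. Qed.

Lemma TT_mono i j : (i <= j)%nat -> TT i <= TT j.
Proof.
  induction j; intros H.
  - replace i with 0%nat by lia. lra.
  - destruct (Nat.eq_dec i (S j)); [subst; lra|].
    rewrite TT_S. pose proof (IHj ltac:(lia)). pose proof (TT_nonneg j). lra.
Qed.

Lemma uu_sq i : uu i ^ 2 = TT i.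
Proof. unfold uu. apply pow2_sqrt, TT_nonneg. Qed.

Lemma uu_nonneg i : 0 <= uu i.
Proof. apply sqrt_pos. Qed.

Lemma uu_pos i : (1 <= i)%nat -> 0 < uu i.
Proof. intros H. unfold uu. apply sqrt_lt_R0. pose proof (TT_ge1 i H). lra. Qed.

Lemma tt_le_uu j : (1 <= j)%nat -> tt (j-1) <= uu j.
Proof.
  intros H. pose proof (tt_sq (j-1)). pose proof (uu_sq j).
  pose proof (TT_S (j-1)). replace (S (j-1)) with j in * by lia.
  pose proof (TT_nonneg (j-1)). pose proof (tt_pos (j-1)). pose proof (uu_nonneg j).
  nra.
Qed.

Lemma PP0 k : PP 0 k = 0.
Proof. unfold PP. simpl. ring. Qed.

Lemma sq_diff i j k : (i < j)%nat ->
  (PP i k - PP j k) ^ 2 =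
  (if (k <? j)%nat then tt k ^ 2 else 0) - (if (k <? i)%nat then tt k ^ 2 else 0)
  + (if (S k =? i)%nat then uu i ^ 2 else 0)
  + (if (S k =? j)%nat then 2 * tt k * uu j + uu j ^ 2 else 0).
Proof.
  intros H. unfold PP.
  destruct (Nat.ltb_spec k i); destruct (Nat.ltb_spec k j);
  destruct (Nat.eqb_spec (S k) i); destruct (Nat.eqb_spec (S k) j);
  try lia; ring.
Qed.

Definition sqd m i j := sumR m (fun k => (PP i k - PP j k) ^ 2).

Definition Dsq m j := if (j <=? m)%nat then 2 * TT j + 2 * tt (j-1) * uu j else TT m.

Lemma sqd_val m i j : (i < j)%nat -> (j <= S m)%nat -> sqd m i j = Dsq m j.
Proof.
  intros H1 H2. unfold sqd.
  rewrite (sumR_ext _ _ _ (fun k _ => sq_diff i j k H1)).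
  rewrite sumR_4, !sumR_prefix.
  assert (Hi : sumR m (fun k => if (S k =? i)%nat then uu i ^ 2 else 0)
               = TT i).
  { destruct i as [|i'].
    - rewrite sumR_single_out by lia. reflexivity.
    - rewrite sumR_single_in by lia. apply uu_sq. }
  rewrite Hi. replace (Nat.min i m) with i by lia. fold (TT i).
  unfold Dsq. destruct (Nat.leb_spec j m).
  - rewrite sumR_single_in by lia. replace (Nat.min j m) with j by lia.
    fold (TT j). rewrite uu_sq. ring.
  - rewrite sumR_single_out by lia. replace (Nat.min j m) with m by lia.
    fold (TT m). ring.
Qed.

Lemma edist_val m i j : (i < j)%nat -> (j <= S m)%nat ->
  edist m (PP i) (PP j) = sqrt (Dsq m j).
Proof.
  intros H1 H2. rewrite <- (sqd_val m i j H1 H2). reflexivity.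
Qed.

Lemma Dsq_bounds m j : (1 <= j <= m)%nat -> 2 * TT j <= Dsq m j <= 4 * TT j.
Proof.
  intros H. unfold Dsq. destruct (Nat.leb_spec j m); [|lia].
  pose proof (tt_le_uu j ltac:(lia)). pose proof (uu_sq j).
  pose proof (tt_pos (j-1)). pose proof (uu_nonneg j). nra.
Qed.

Lemma Dsq_last m : Dsq m (S m) = TT m.
Proof. unfold Dsq. destruct (Nat.leb_spec (S m) m); [lia|reflexivity]. Qed.

Lemma Dsq_pos m j : (1 <= m)%nat -> (1 <= j <= S m)%nat -> 0 < Dsq m j.
Proof.
  intros Hm H. destruct (Nat.eq_dec j (S m)).
  - subst. rewrite Dsq_last. pose proof (TT_ge1 m Hm). lra.
  - pose proof (Dsq_bounds m j ltac:(lia)). pose proof (TT_ge1 j ltac:(lia)). lra.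
Qed.

Lemma Dsq_lt m a b : (1 <= m)%nat -> (1 <= a)%nat -> (a < b)%nat -> (b <= S m)%nat ->
  Dsq m a <> Dsq m b.
Proof.
  intros Hm Ha Hab Hb.
  pose proof (Dsq_bounds m a ltac:(lia)).
  pose proof (TT_S a). pose proof (TT_nonneg a).
  destruct (Nat.eq_dec b (S m)).
  - subst. rewrite Dsq_last.
    destruct (Nat.eq_dec a m).
    + subst. pose proof (TT_ge1 m Hm). lra.
    + pose proof (TT_mono (S a) m ltac:(lia)). lra.
  - pose proof (Dsq_bounds m b ltac:(lia)). pose proof (TT_mono (S a) b ltac:(lia)). lra.
Qed.

Lemma vl_inj m a b : (1 <= m)%nat -> (1 <= a <= S m)%nat -> (1 <= b <= S m)%nat ->
  sqrt (Dsq m a) = sqrt (Dsq m b) -> a = b.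
Proof.
  intros Hm Ha Hb E.
  apply sqrt_inj in E; [| pose proof (Dsq_pos m a Hm Ha); lra | pose proof (Dsq_pos m b Hm Hb); lra].
  destruct (Nat.lt_trichotomy a b) as [h|[h|h]]; auto.
  - exfalso; apply (Dsq_lt m a b); auto; lia.
  - exfalso; apply (Dsq_lt m b a); auto; lia.
Qed.

Lemma dotPP m a i : sumR m (fun k => a k * PP i k) =
  sumR (Nat.min i m) (fun k => a k * tt k) +
  sumR m (fun k => if (S k =? i)%nat then a k * uu i else 0).
Proof.
  rewrite <- sumR_prefix, <- sumR_plus. apply sumR_ext. intros k _.
  unfold PP. destruct (k <? i)%nat; destruct (S k =? i)%nat; ring.
Qed.

Lemma dot0 m a : sumR m (fun k => a k * PP 0 k) = 0.
Proof. apply sumR_zero. intros; rewrite PP0; ring. Qed.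

Lemma dotin m a i : (1 <= i <= m)%nat -> sumR m (fun k => a k * PP i k) =
  sumR i (fun k => a k * tt k) + a (i-1)%nat * uu i.
Proof.
  intros H. rewrite dotPP, sumR_single_in by lia.
  replace (Nat.min i m) with i by lia. reflexivity.
Qed.

Lemma dotX m a : sumR m (fun k => a k * PP (S m) k) = sumR m (fun k => a k * tt k).
Proof.
  rewrite dotPP, sumR_single_out by lia.
  replace (Nat.min (S m) m) with m by lia. ring.
Qed.

Lemma fwd m a p : (p <= m)%nat ->
  (forall i, (1 <= i <= p)%nat -> sumR m (fun k => a k * PP i k) = 0) ->
  forall k, (k < p)%nat -> a k = 0.
Proof.
  induction p; intros Hp H k Hk; [lia|].
  assert (IH: forall k, (k < p)%nat -> a k = 0)
    by (apply IHp; [lia| intros; apply H; lia]).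
  destruct (Nat.eq_dec k p); [subst|apply IH; lia].
  specialize (H (S p) ltac:(lia)). rewrite dotin in H by lia.
  replace (S p - 1)%nat with p in H by lia.
  rewrite sumR_S in H.
  rewrite (sumR_zero p) in H by (intros; rewrite IH; [ring|lia]).
  pose proof (tt_pos p). pose proof (uu_nonneg (S p)).
  assert (a p * (tt p + uu (S p)) = 0) by lra.
  apply Rmult_integral in H2. destruct H2; [auto|lra].
Qed.

Lemma bwd m a r : (r <= m)%nat ->
  (forall i, (m - r < i <= m)%nat ->
     sumR m (fun k => a k * PP i k) = sumR m (fun k => a k * PP (S m) k)) ->
  forall k, (m - r <= k < m)%nat -> a k = 0.
Proof.
  induction r; intros Hr H k Hk; [lia|].
  assert (IH: forall k, (m - r <= k < m)%nat -> a k = 0)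
    by (apply IHr; [lia|intros; apply H; lia]).
  destruct (Nat.eq_dec k (m - S r)); [|apply IH; lia].
  subst k.
  specialize (H (m - r)%nat ltac:(lia)).
  rewrite dotin in H by lia. rewrite dotX in H.
  rewrite (sumR_tail m (m - r)) in H.
  2: lia. 2: intros; rewrite IH; [ring|lia].
  replace (m - r - 1)%nat with (m - S r)%nat in H by lia.
  pose proof (uu_pos (m - r) ltac:(lia)).
  assert (a (m - S r)%nat * uu (m - r)%nat = 0) by lra.
  apply Rmult_integral in H1. destruct H1; [auto|lra].
Qed.

Lemma pigeon N L E : NoDup L -> NoDup E -> (forall x, In x L -> (x < N)%nat) ->
  (forall x, In x E -> (x < N)%nat) -> (forall x, In x L -> ~ In x E) ->
  (length L + length E <= N)%nat.
Proof.
  intros H1 H2 H3 H4 H5. rewrite <- length_app.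
  replace N with (length (seq 0 N)) at 1 by apply length_seq.
  apply NoDup_incl_length.
  - apply NoDup_app; auto.
  - intros x Hx. apply in_seq. apply in_app_or in Hx.
    destruct Hx as [Hx|Hx]; [apply H3 in Hx|apply H4 in Hx]; lia.
Qed.

Lemma no_hyperplane m L : (1 <= m)%nat -> index_subset (S (S m)) (m+1) L ->
  ~ on_common_hyperplane m PP L.
Proof.
  intros Hm [HND [Hlen HF]] [a [b [[k0 [Hk0 Ha0]] HP]]].
  rewrite Forall_forall in HP, HF.
  assert (Hex: exists l, (l < S (S m))%nat /\ ~ In l L).
  { destruct (classic (exists l, (l < S (S m))%nat /\ ~ In l L)) as [h|h]; auto.
    exfalso.
    assert (incl (seq 0 (S (S m))) L).
    { intros x Hx. apply in_seq in Hx. apply NNPP. intros Hn. apply h. exists x. split; [lia|auto]. }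
    apply NoDup_incl_length in H; [|apply seq_NoDup]. rewrite length_seq in H. lia. }
  destruct Hex as [l [Hl Hnl]].
  assert (Hin: forall i, (i < S (S m))%nat -> i <> l -> In i L).
  { intros i Hi Hne. destruct (in_dec Nat.eq_dec i L); auto. exfalso.
    assert (length L + length [l; i] <= S (S m))%nat.
    { apply pigeon; auto.
      - constructor; [simpl; intros [h|h]; auto; lia| constructor; [auto|constructor]].
      - simpl; intros x [h|[h|h]]; subst; auto; contradiction.
      - simpl; intros x Hx [h|[h|h]]; subst; auto. }
    simpl in H. lia. }
  assert (hP: forall i, (i < S (S m))%nat -> i <> l -> sumR m (fun k => a k * PP i k) = b).
  { intros. apply HP. apply Hin; auto. }
  apply Ha0.
  destruct (Nat.eq_dec l (S m)) as [El|Nl].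
  - assert (b = 0) by (rewrite <- (hP 0%nat) by lia; apply dot0).
    apply (fwd m a m); auto. intros i Hi. rewrite hP by lia. auto.
  - destruct (Nat.eq_dec l 0) as [E0|N0].
    + apply (bwd m a m); [lia| |lia]. intros i Hi.
      rewrite !hP by lia. reflexivity.
    + assert (Hb: b = 0) by (rewrite <- (hP 0%nat) by lia; apply dot0).
      assert (A1: forall k, (k < l - 1)%nat -> a k = 0).
      { apply (fwd m a (l-1)); [lia|]. intros i Hi. rewrite hP by lia. auto. }
      assert (A2: forall k, (l <= k < m)%nat -> a k = 0).
      { intros k Hk. apply (bwd m a (m - l)); [lia| |lia]. intros i Hi.
        rewrite !hP by lia. reflexivity. }
      assert (A3: a (l-1)%nat = 0).
      { pose proof (hP (S m) ltac:(lia) ltac:(lia)) as X.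
        rewrite dotX, Hb in X.
        rewrite (sumR_tail m l) in X by (try intros; try apply Rmult_eq_0_compat_r, A2; lia).
        replace l with (S (l-1)) in X at 1 by lia.
        rewrite sumR_S, (sumR_zero (l-1)) in X by (intros; rewrite A1; [ring|lia]).
        pose proof (tt_pos (l-1)).
        assert (a (l-1)%nat * tt (l-1)%nat = 0) by lra.
        apply Rmult_integral in H0; destruct H0; [auto|lra]. }
      destruct (Nat.lt_trichotomy k0 (l-1)) as [h|[h|h]].
      * apply A1; auto.
      * subst; auto.
      * apply A2; lia.
Qed.

Lemma expand d x y : sumR d (fun k => (x k - y k) ^ 2) =
  sumR d (fun k => x k ^ 2) - 2 * sumR d (fun k => x k * y k) + sumR d (fun k => y k ^ 2).
Proof. induction d; [simpl; ring|rewrite !sumR_S, IHd; ring]. Qed.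

Lemma lin d c x y : sumR d (fun k => (c k - x k) * y k) =
  sumR d (fun k => y k * c k) - sumR d (fun k => y k * x k).
Proof. induction d; [simpl; ring|rewrite !sumR_S, IHd; ring]. Qed.

Lemma no_sphere m L : (1 <= m)%nat -> index_subset (S (S m)) (m+2) L ->
  ~ on_common_hypersphere m PP L.
Proof.
  intros Hm [HND [Hlen HF]] [c [r [Hr HP]]].
  rewrite Forall_forall in HP, HF.
  assert (Hin: forall i, (i < S (S m))%nat -> In i L).
  { intros i Hi. destruct (in_dec Nat.eq_dec i L); auto. exfalso.
    assert (length L + length [i] <= S (S m))%nat.
    { apply pigeon; auto.
      - constructor; [simpl; auto|constructor].
      - simpl; intros x [h|h]; subst; auto; contradiction.
      - simpl; intros x Hx [h|h]; subst; auto. }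
    simpl in H. lia. }
  assert (hP: forall i, (i < S (S m))%nat ->
     sumR m (fun k => (PP i k - c k) ^ 2) = r ^ 2).
  { intros i Hi. rewrite <- (HP i (Hin i Hi)). unfold edist.
    rewrite pow2_sqrt; auto. apply sumR_nonneg. intros; apply pow2_ge_0. }
  assert (N0: sumR m (fun k => PP 0 k ^ 2) = 0)
    by (apply sumR_zero; intros; rewrite PP0; ring).
  assert (D0: forall y, sumR m (fun k => PP 0 k * y k) = 0)
    by (intros; apply sumR_zero; intros; rewrite PP0; ring).
  assert (E0 := hP 0%nat ltac:(lia)). rewrite (expand m (PP 0) c), N0, D0 in E0.
  assert (X0 := sqd_val m 0 (S m) ltac:(lia) ltac:(lia)). unfold sqd in X0.
  rewrite (expand m (PP 0) (PP (S m))), N0, D0, Dsq_last in X0.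
  assert (Hc: forall k, (k < m)%nat -> c k - PP (S m) k = 0).
  { apply (fwd m (fun k => c k - PP (S m) k) m); [lia|].
    intros i Hi. rewrite (lin m c (PP (S m)) (PP i)).
    assert (Ei := hP i ltac:(lia)). rewrite (expand m (PP i) c) in Ei.
    assert (Xi := sqd_val m i (S m) ltac:(lia) ltac:(lia)). unfold sqd in Xi.
    rewrite (expand m (PP i) (PP (S m))), Dsq_last in Xi. lra. }
  assert (EX := HP (S m) (Hin (S m) ltac:(lia))). unfold edist in EX.
  rewrite sumR_zero in EX. { rewrite sqrt_0 in EX. lra. }
  intros k Hk. specialize (Hc k Hk). replace (PP (S m) k - c k) with (- (c k - PP (S m) k)) by ring.
  rewrite Hc. ring.
Qed.

Lemma pairs_in N a b : In (a,b) (pairs N) -> (a < b < N)%nat.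
Proof.
  unfold pairs. intros H. apply in_flat_map in H as [x [Hx Hy]].
  apply in_map_iff in Hy as [y [Hy Hy']]. inversion Hy; subst.
  apply in_seq in Hx. apply in_seq in Hy'. lia.
Qed.

Lemma count_seq j len a : length (filter (fun y => (y =? j)%nat) (seq a len)) =
  (Nat.min (a+len) (S j) - Nat.max a j)%nat.
Proof.
  revert a; induction len; intros a; simpl.
  - lia.
  - destruct (Nat.eqb_spec a j); simpl; rewrite IHlen; lia.
Qed.

Lemma count_map (x j : nat) s : length (filter (fun ij : nat * nat => (snd ij =? j)%nat)
  (map (fun y => (x, y)) s)) = length (filter (fun y => (y =? j)%nat) s).
Proof. induction s; simpl; auto. destruct (a =? j)%nat; simpl; auto. Qed.

Lemma count_pairs_gen N j len a : (j < N)%nat ->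
  length (filter (fun ij : nat*nat => (snd ij =? j)%nat)
    (flat_map (fun i => map (fun jj => (i, jj)) (seq (S i) (N - S i))) (seq a len)))
  = (Nat.min (a+len) j - a)%nat.
Proof.
  intros HjN. revert a; induction len; intros a; simpl; [lia|].
  rewrite filter_app, length_app, count_map, count_seq, IHlen. lia.
Qed.

Lemma count_pairs N j : (j < N)%nat ->
  length (filter (fun ij : nat*nat => (snd ij =? j)%nat) (pairs N)) = j.
Proof. intros H. unfold pairs. rewrite count_pairs_gen by auto. lia. Qed.

Lemma mult_val m j : (1 <= m)%nat -> (1 <= j <= S m)%nat ->
  mult m (S (S m)) PP (sqrt (Dsq m j)) = j.
Proof.
  intros Hm Hj. unfold mult.
  rewrite (filter_ext_in _ (fun ij : nat*nat => (snd ij =? j)%nat)).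
  - apply count_pairs; lia.
  - intros [a b] Hab. apply pairs_in in Hab. simpl.
    rewrite edist_val by lia. unfold Reqb.
    destruct (Req_EM_T (sqrt (Dsq m b)) (sqrt (Dsq m j))) as [E|E];
      destruct (Nat.eqb_spec b j); auto.
    + exfalso. apply n. apply (vl_inj m); auto; lia.
    + subst. contradiction.
Qed.

Lemma edist_eq0 d x y : pt_eq d x y -> edist d x y = 0.
Proof.
  intros H. unfold edist. rewrite sumR_zero; [apply sqrt_0|].
  intros k Hk. rewrite (H k Hk). ring.
Qed.

Theorem theorem1p1 :
  forall n : nat, (3 <= n)%nat ->
  exists P : nat -> nat -> R, crescent (n - 2) n P.
Proof.
  intros n Hn. destruct n as [|[|m]]; [lia|lia|].
  replace (S (S m) - 2)%nat with m by lia.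
  assert (Hm: (1 <= m)%nat) by lia.
  exists PP. split; [|split].
  - split; [|split].
    + intros i j Hi Hj Hne Heq.
      destruct (Nat.lt_trichotomy i j) as [h|[h|h]]; [|contradiction|].
      * pose proof (edist_eq0 _ _ _ Heq). rewrite edist_val in H by lia.
        pose proof (Dsq_pos m j Hm ltac:(lia)).
        pose proof (sqrt_lt_R0 _ H0). lra.
      * assert (Heq' : pt_eq m (PP j) (PP i)) by (intros k Hk; symmetry; apply Heq; auto).
        pose proof (edist_eq0 _ _ _ Heq'). rewrite edist_val in H by lia.
        pose proof (Dsq_pos m i Hm ltac:(lia)).
        pose proof (sqrt_lt_R0 _ H0). lra.
    + intros L HL. apply no_hyperplane; auto.
    + intros L HL. apply no_sphere; auto.
  - exists (map (fun j => sqrt (Dsq m j)) (seq 1 (S m))). split; [|split].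
    + assert (G: forall l, (forall x, In x l -> (1 <= x <= S m)%nat) -> NoDup l ->
                NoDup (map (fun j => sqrt (Dsq m j)) l)).
      { induction l; intros Hl Hnd; simpl; [constructor|].
        inversion Hnd; subst. constructor.
        - intros Hin. apply in_map_iff in Hin as [y [Ey Iy]].
          assert (y = a) by (apply (vl_inj m); auto; [apply Hl; simpl; auto| apply Hl; simpl; auto]).
          subst; contradiction.
        - apply IHl; auto. intros; apply Hl; simpl; auto. }
      apply G; [intros x Hx; apply in_seq in Hx; lia| apply seq_NoDup].
    + rewrite length_map, length_seq. lia.
    + intros v. split.
      * intros Hv. apply in_map_iff in Hv as [j [Ej Ij]]. apply in_seq in Ij.
        exists 0%nat, j. split; [lia|split; [lia|]]. rewrite edist_val by lia. auto.
      * intros [i [j [Hij [Hj Ev]]]]. apply in_map_iff. exists j.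
        rewrite edist_val in Ev by lia. split; auto. apply in_seq. lia.
  - intros k Hk. exists (sqrt (Dsq m k)). split.
    + exists 0%nat, k. split; [lia|split; [lia|]]. apply edist_val; lia.
    + apply mult_val; lia.
Qed.
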